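(* Let $L$ be a factorial $W^*$-lattice of type $I_n$. Then $|Min(L)|=|\mathbb R|$.
   Context: Orthocomplemented lattice (paper's convention): a set $L$ with a partial order $\le$ in which every subset has a supremum and an infimum ($l\vee l'$, $l\wedge l'$ denote binary sup/inf, $0=\inf L$, $1=\sup L$), such that: (continuity) for every increasing net $(l_i)$ and every $l$, $\bigvee_i(l\wedge l_i)=l\wedge\bigvee_i l_i$, and for every decreasing net $(l_i)$ and every $l$, $\bigwedge_i(l\vee l_i)=l\vee\bigwedge_i l_i$; (modularity) $l\le l''$ implies $(l\vee l')\wedge l''=l\vee(l'\wedge l'')$ for all $l'$; together with a map $l\mapsto l^\perp$, also written $1-l$, satisfying $l^{\perp\perp}=l$, $l\vee l^\perp=1$, $l\wedge l^\perp=0$, and $l\le l'\Rightarrow l'^\perp\le l^\perp$. For $l'\le l$ put $l-l'=(1-l')\wedge l$. Write $\perp(l)=\{l'\in L: l'\le 1-l\}$; elements of $\perp(l)$ are orthogonal to $l$; a family is mutually orthogonal if any two distinct members are orthogonal. $l$ commutes with $l'$ if $l=(l\wedge l')\vee(l\wedge l'^\perp)$; $c(l)$ is the set of elements commuting with $l$; $C(L)=\bigcap_{l\in L}c(l)$. $L$ is factorial if $C(L)=\{0,1\}$ and abelian if $C(L)=L$. For $l\in L$, $L\wedge l=\{l'\in L:l'\le l\}$ is an orthocomplemented lattice with complement $l'\mapsto l-l'$; $l$ is an abelian element if $L\wedge l$ is abelian. $L$ is an R-lattice if $C(L\wedge l)=\{c\wedge l: c\in C(L)\}$ for every $l\in L$.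 An element $l\ne 0$ is minimal if for every $l'\in L$ either $l\wedge l'=0$ or $l\wedge l'=l$; $Min(L)$ is the set of minimal elements and $Min(l)=\{m\in Min(L): m\le l\}$. Regular equivalence relation: for an equivalence relation $\sim$ on $L$ write $l\le_\sim l'$ if there is $l''\le l'$ with $l\sim l''$. $\sim$ is regular if: (1) $l\sim 0\iff l=0$; (2) $l\ge l'$ and $l\le_\sim l'$ imply $l\sim l'$; (3) for all $l,l'$, $l\le_\sim l'$ or $l'\le_\sim l$; (4) if $(l_i)$, $(l_i')$ are families of mutually orthogonal elements with $l_i\sim l_i'$ for all $i$, then $\bigvee_i l_i\sim\bigvee_i l_i'$; (5) $l'\le l$ and $l'\sim l$ imply $l'=l$. A family $(l_i)_{i\in I}$ is independent if for every partition $\{J,K\}$ of $I$, $\bigvee_{i\in J}l_i\wedge\bigvee_{i\in K}l_i=0$. A $\sim$-compatible dimension function is a map $D:L\to[0,1]$ with $D(0)=0$, $D(1)=1$, $D(l\vee l')+D(l\wedge l')=D(l)+D(l')$, $D(l)=D(l')\iff l\sim l'$, $D(l)\le D(l')\iff l\le_\sim l'$, and $D(\bigvee_i l_i)=\sum_i D(l_i)$ for every finite or countable independent family. A factorial R-lattice $L$ is of type $I_n$ if it carries a regular equivalence relation $\sim$ and a $\sim$-compatible dimension function $D$ with $D(L)=\{0,\frac1n,\dots,\frac{n-1}{n},1\}$. A factorial $W^*$-lattice of type $I_n$ is a factorial R-lattice of type $I_n$ whose cardinality equals that of $\mathbb R$. *)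

(* Defs.v *)
From Stdlib Require Import Reals List.

Set Implicit Arguments.

Record OLData : Type := mkOL {
  carrier :> Type;
  le : carrier -> carrier -> Prop;
  sup : (carrier -> Prop) -> carrier;
  inf : (carrier -> Prop) -> carrier;
  compl : carrier -> carrier
}.

Section OL.
Variable L : OLData.

Definition join (a b : L) : L := sup L (fun x => x = a \/ x = b).
Definition meet (a b : L) : L := inf L (fun x => x = a \/ x = b).
Definition bot : L := inf L (fun _ => True).
Definition top : L := sup L (fun _ => True).
Definition fam_sup {I : Type} (f : I -> L) : L := sup L (fun x => exists i, x = f i).
Definition fam_inf {I : Type} (f : I -> L) : L := inf L (fun x => exists i, x = f i).

Definition directed (I : Type) (r : I -> I -> Prop) : Prop :=
  inhabited I /\ (forall i, r i i) /\ (forall i j k, r i j -> r j k -> r i k) /\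
  (forall i j, exists k, r i k /\ r j k).

Definition is_partial_order : Prop :=
  (forall a, le L a a) /\
  (forall a b, le L a b -> le L b a -> a = b) /\
  (forall a b c, le L a b -> le L b c -> le L a c).

Definition is_complete : Prop :=
  (forall (S : L -> Prop) x, S x -> le L x (sup L S)) /\
  (forall (S : L -> Prop) u, (forall x, S x -> le L x u) -> le L (sup L S) u) /\
  (forall (S : L -> Prop) x, S x -> le L (inf L S) x) /\
  (forall (S : L -> Prop) u, (forall x, S x -> le L u x) -> le L u (inf L S)).

Definition is_continuous : Prop :=
  (forall (I : Type) (r : I -> I -> Prop) (f : I -> L),
     directed r -> (forall i j, r i j -> le L (f i) (f j)) ->
     forall l, fam_sup (fun i => meet l (f i)) = meet l (fam_sup f)) /\
  (forall (I : Type) (r : I -> I -> Prop) (f : I -> L),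
     directed r -> (forall i j, r i j -> le L (f j) (f i)) ->
     forall l, fam_inf (fun i => join l (f i)) = join l (fam_inf f)).

Definition is_modular : Prop :=
  forall a b c, le L a c -> meet (join a b) c = join a (meet b c).

Definition is_orthocomplement : Prop :=
  (forall a, compl L (compl L a) = a) /\
  (forall a, join a (compl L a) = top) /\
  (forall a, meet a (compl L a) = bot) /\
  (forall a b, le L a b -> le L (compl L b) (compl L a)).

Definition is_ortho_lattice : Prop :=
  is_partial_order /\ is_complete /\ is_continuous /\ is_modular /\ is_orthocomplement.

Definition orthogonal (a b : L) : Prop := le L b (compl L a).

Definition commutes (a b : L) : Prop := a = join (meet a b) (meet a (compl L b)).

Definition central (c : L) : Prop := forall l, commutes c l.

Definition factorial : Prop := forall c, central c <-> (c = bot \/ c = top).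

Definition ldiff (l l' : L) : L := meet (compl L l') l.

(* a \in C(L /\ l): a <= l commutes (in L /\ l, with complement l' |-> l - l')
   with every b <= l *)
Definition central_in (l a : L) : Prop :=
  le L a l /\ forall b, le L b l -> a = join (meet a b) (meet a (ldiff l b)).

Definition R_lattice : Prop :=
  forall l a, central_in l a <-> exists c, central c /\ a = meet c l.

Definition minimal (m : L) : Prop :=
  m <> bot /\ forall l, meet m l = bot \/ meet m l = m.

Definition le_sim (sim : L -> L -> Prop) (a b : L) : Prop :=
  exists c, le L c b /\ sim a c.

Definition mutually_orthogonal {I : Type} (f : I -> L) : Prop :=
  forall i j, i <> j -> orthogonal (f i) (f j).

Definition regular (sim : L -> L -> Prop) : Prop :=
  (forall a, sim a a) /\ (forall a b, sim a b -> sim b a) /\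
  (forall a b c, sim a b -> sim b c -> sim a c) /\
  (forall a, sim a bot <-> a = bot) /\
  (forall a b, le L b a -> le_sim sim a b -> sim a b) /\
  (forall a b, le_sim sim a b \/ le_sim sim b a) /\
  (forall (I : Type) (f g : I -> L), mutually_orthogonal f -> mutually_orthogonal g ->
     (forall i, sim (f i) (g i)) -> sim (fam_sup f) (fam_sup g)) /\
  (forall a b, le L b a -> sim b a -> b = a).

Definition independent {I : Type} (f : I -> L) : Prop :=
  forall J : I -> Prop,
    meet (sup L (fun x => exists i, J i /\ x = f i))
         (sup L (fun x => exists i, ~ J i /\ x = f i)) = bot.

(* finite or countable index type *)
Definition countable (I : Type) : Prop :=
  exists e : I -> nat, forall i j, e i = e j -> i = j.

Definition finsum {I : Type} (g : I -> R) (s : list I) : R :=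
  fold_right (fun i acc => (g i + acc)%R) 0%R s.

(* (unordered) sum of a family of nonnegative reals: supremum of finite partial sums *)
Definition has_sum {I : Type} (g : I -> R) (r : R) : Prop :=
  is_lub (fun x => exists s, NoDup s /\ x = finsum g s) r.

Definition dimension_function (sim : L -> L -> Prop) (D : L -> R) : Prop :=
  (forall a, (0 <= D a <= 1)%R) /\
  D bot = 0%R /\ D top = 1%R /\
  (forall a b, (D (join a b) + D (meet a b) = D a + D b)%R) /\
  (forall a b, D a = D b <-> sim a b) /\
  (forall a b, (D a <= D b)%R <-> le_sim sim a b) /\
  (forall (I : Type) (f : I -> L), countable I -> independent f ->
     has_sum (fun i => D (f i)) (D (fam_sup f))).

Definition type_I (n : nat) : Prop :=
  exists (sim : L -> L -> Prop) (D : L -> R),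
    regular sim /\ dimension_function sim D /\
    forall r, (exists a, D a = r) <-> exists k, (k <= n)%nat /\ r = (INR k / INR n)%R.

End OL.

Definition same_card (A B : Type) : Prop :=
  exists f : A -> B, (forall x y, f x = f y -> x = y) /\ (forall y, exists x, f x = y).

Definition factorial_R_lattice_type_I (L : OLData) (n : nat) : Prop :=
  is_ortho_lattice L /\ factorial L /\ R_lattice L /\ type_I L n.

Definition factorial_W_lattice_type_I (L : OLData) (n : nat) : Prop :=
  factorial_R_lattice_type_I L n /\ same_card L R.

(* Main.v *)
Require Import Defs.
From Stdlib Require Import Reals List.
From Stdlib Require Import Classical ClassicalEpsilon ProofIrrelevance FunctionalExtensionality PropExtensionality Arith Lia Lra Cantor.
From Stdlib Require FinFun.

Definition incl_s {U : Type} (S T : U -> Prop) := forall u, S u -> T u.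
Definition union_s {U : Type} (C : (U -> Prop) -> Prop) : U -> Prop :=
  fun u => exists S, C S /\ S u.
Definition chain_s {U : Type} (C : (U -> Prop) -> Prop) :=
  forall S T, C S -> C T -> incl_s S T \/ incl_s T S.

Lemma set_ext {U : Type} (S T : U -> Prop) : incl_s S T -> incl_s T S -> S = T.
Proof.
  intros H1 H2; apply functional_extensionality; intro u;
  apply propositional_extensionality; split; auto.
Qed.

Section ZornS.
Variable U : Type.
Variable F : (U -> Prop) -> Prop.
Variable S0 : U -> Prop.
Hypothesis HS0 : F S0.
Hypothesis Hch : forall C, (exists S, C S) -> (forall S, C S -> F S) -> chain_s C ->
  F (union_s C).
Hypothesis Hnomax : forall M, F M -> exists S, F S /\ incl_s M S /\ ~ incl_s S M.

Definition succ (M : U -> Prop) : U -> Prop :=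
  match excluded_middle_informative (F M) with
  | left H => proj1_sig (constructive_indefinite_description _ (Hnomax M H))
  | right _ => M
  end.

Lemma succ_spec M : F M -> F (succ M) /\ incl_s M (succ M) /\ ~ incl_s (succ M) M.
Proof.
  intro H; unfold succ; destruct (excluded_middle_informative (F M)) as [H'|H'];
  [ destruct (constructive_indefinite_description _ (Hnomax M H')) as [S HS]; exact HS
  | contradiction].
Qed.

Inductive T : (U -> Prop) -> Prop :=
| T0 : T S0
| TS : forall M, T M -> T (succ M)
| TU : forall C, (exists S, C S) -> (forall S, C S -> T S) -> chain_s C -> T (union_s C).

Lemma T_F M : T M -> F M.
Proof.
  induction 1.
  - exact HS0.
  - apply succ_spec; auto.
  - apply Hch; auto.
Qed.

Lemma T_S0 M : T M -> incl_s S0 M.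
Proof.
  induction 1.
  - intros u h; exact h.
  - intros u h; apply (proj1 (proj2 (succ_spec M (T_F M H)))); auto.
  - destruct H as [S HS]. intros u h. exists S; split; auto. apply H1; auto.
Qed.

Lemma T_succ M : T M -> incl_s M (succ M).
Proof. intro H; apply (succ_spec M (T_F M H)). Qed.

Definition extreme c := T c /\ forall x, T x -> incl_s x c -> x <> c -> incl_s (succ x) c.

Lemma incl_trans {S1 S2 S3 : U -> Prop} : incl_s S1 S2 -> incl_s S2 S3 -> incl_s S1 S3.
Proof. unfold incl_s; auto. Qed.

Lemma lemA c : extreme c -> forall x, T x -> incl_s x c \/ incl_s (succ c) x.
Proof.
  intros [Tc Ec] x Tx; induction Tx.
  - left; apply T_S0; auto.
  - destruct IHTx as [h|h].
    + destruct (classic (M = c)) as [e|e].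
      * subst; right; intros u hu; exact hu.
      * left; apply Ec; auto.
    + right; apply (incl_trans h); apply T_succ; auto.
  - destruct (classic (exists S, C S /\ ~ incl_s S c)) as [[S [CS nS]]|h].
    + right; destruct (H1 S CS) as [h|h]; [contradiction|].
      intros u hu; exists S; split; auto.
    + left; intros u [S [CS hS]].
      destruct (classic (incl_s S c)) as [h'|h']; [auto|].
      exfalso; apply h; eauto.
Qed.

Lemma lemB c : T c -> extreme c.
Proof.
  intro Tc; induction Tc.
  - split; [constructor|]. intros x Tx hx ne; exfalso; apply ne.
    apply set_ext; auto; apply T_S0; auto.
  - split; [constructor; auto|]. intros x Tx hx ne.
    destruct (lemA M IHTc x Tx) as [h|h].
    + destruct (classic (x = M)) as [e|e].
      * subst; intros u hu; auto.
      * apply (incl_trans (proj2 IHTc x Tx h e)); apply T_succ; auto.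
    + exfalso; apply ne; apply set_ext; auto.
  - split; [constructor; auto|]. intros x Tx hx ne.
    destruct (classic (exists z, C z /\ incl_s x z /\ ~ incl_s (succ z) x)) as
      [[z [Cz [hxz nz]]]|hno].
    + destruct (classic (x = z)) as [e|e].
      * subst z.
        destruct (classic (exists w, C w /\ ~ incl_s w x)) as [[w [Cw nw]]|hw].
        -- destruct (lemA x (H1 x Cz) w (H0 w Cw)) as [h|h]; [contradiction|].
           intros u hu; exists w; split; auto.
        -- exfalso; apply ne; apply set_ext; auto.
           intros u [w [Cw hw']]. destruct (classic (incl_s w x)) as [h|h]; auto.
           exfalso; apply hw; eauto.
      * intros u hu; exists z; split; auto. apply (proj2 (H1 z Cz) x Tx hxz e); auto.
    + exfalso; apply ne; apply set_ext; auto.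
      intros u [w [Cw hw']].
      destruct (lemA w (H1 w Cw) x Tx) as [h|h].
      * destruct (classic (incl_s (succ w) x)) as [h2|h2].
        -- apply h2; apply T_succ; auto.
        -- exfalso; apply hno; eauto.
      * apply h; apply T_succ; auto.
Qed.

Lemma T_chain : chain_s T.
Proof.
  intros x y Tx Ty. destruct (lemA y (lemB y Ty) x Tx) as [h|h]; auto.
  right; apply (incl_trans (T_succ y Ty) h).
Qed.

Lemma zorn_false : False.
Proof.
  assert (TW : T (union_s T)).
  { constructor; auto. exists S0; constructor. apply T_chain. }
  destruct (succ_spec _ (T_F _ TW)) as [_ [_ n]]. apply n.
  intros u hu. exists (succ (union_s T)); split; auto. constructor; auto.
Qed.
End ZornS.

Lemma zorn_sets (U : Type) (F : (U -> Prop) -> Prop) (S0 : U -> Prop) :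
  F S0 ->
  (forall C, (exists S, C S) -> (forall S, C S -> F S) -> chain_s C -> F (union_s C)) ->
  exists M, F M /\ forall S, F S -> incl_s M S -> incl_s S M.
Proof.
  intros H0 Hc. apply NNPP; intro Hn.
  apply (zorn_false U F S0 H0 Hc).
  intros M FM. apply NNPP; intro h. apply Hn. exists M; split; auto.
  intros S FS hMS. apply NNPP; intro h2. apply h. eauto.
Qed.

Definition cf {X Y : Type} (R : X -> Y -> Prop) (d : X -> Y) (x : X) : Y :=
  match excluded_middle_informative (exists y, R x y) with
  | left h => proj1_sig (constructive_indefinite_description _ h)
  | right _ => d x
  end.

Lemma cf_spec {X Y : Type} (R : X -> Y -> Prop) d x : (exists y, R x y) -> R x (cf R d x).
Proof.
  intro h; unfold cf; destruct (excluded_middle_informative (exists y, R x y)) as [h'|h'].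
  - destruct (constructive_indefinite_description _ h') as [y hy]; exact hy.
  - contradiction.
Qed.

Lemma union_two {U : Type} (C : (U -> Prop) -> Prop) u1 u2 :
  chain_s C -> union_s C u1 -> union_s C u2 -> exists S, C S /\ S u1 /\ S u2.
Proof.
  intros ch [S1 [C1 h1]] [S2 [C2 h2]].
  destruct (ch S1 S2 C1 C2) as [h|h]; [exists S2 | exists S1]; auto.
Qed.

Lemma comparability (X : Type) (P Q : X -> Prop) :
  (exists j : X -> X, (forall x, P x -> Q (j x)) /\
      forall x y, P x -> P y -> j x = j y -> x = y) \/
  (exists j : X -> X, (forall x, Q x -> P (j x)) /\
      forall x y, Q x -> Q y -> j x = j y -> x = y).
Proof.
  set (F := fun H : X * X -> Prop =>
    (forall x y, H (x, y) -> P x /\ Q y) /\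
    (forall x y y', H (x, y) -> H (x, y') -> y = y') /\
    (forall x x' y, H (x, y) -> H (x', y) -> x = x')).
  destruct (zorn_sets (X * X) F (fun _ => False)) as [H [[H1 [H2 H3]] Hmax]].
  - unfold F; split; [|split]; intros; contradiction.
  - intros C _ hC ch. unfold F; split; [|split].
    + intros x0 y0 [S [CS hS]]. apply (proj1 (hC S CS)); auto.
    + intros x y y' u1 u2. destruct (union_two C _ _ ch u1 u2) as [S [CS [a b]]].
      apply (proj1 (proj2 (hC S CS)) x y y'); auto.
    + intros x x' y u1 u2. destruct (union_two C _ _ ch u1 u2) as [S [CS [a b]]].
      apply (proj2 (proj2 (hC S CS)) x x' y); auto.
  - destruct (classic (forall x, P x -> exists y, H (x, y))) as [hd|hd].
    + left. exists (cf (fun x y => H (x, y)) (fun x => x)). split.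
      * intros x px. apply (H1 x). apply cf_spec; auto.
      * intros x y px py e. apply (H3 x y (cf (fun x y => H (x, y)) (fun x => x) x)).
        apply cf_spec; auto. rewrite e. apply cf_spec; auto.
    + destruct (classic (forall y, Q y -> exists x, H (x, y))) as [hr|hr].
      * right. exists (cf (fun y x => H (x, y)) (fun x => x)). split.
        -- intros y qy. apply (H1 _ y). apply cf_spec; auto.
        -- intros x y px py e. apply (H2 (cf (fun y x => H (x, y)) (fun x => x) x) x y).
           apply cf_spec; auto. rewrite e. apply cf_spec; auto.
      * exfalso.
        apply not_all_ex_not in hd; destruct hd as [x0 hx0].
        apply imply_to_and in hx0; destruct hx0 as [px0 nx0].
        apply not_all_ex_not in hr; destruct hr as [y0 hy0].
        apply imply_to_and in hy0; destruct hy0 as [qy0 ny0].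
        set (H' := fun p : X * X => H p \/ p = (x0, y0)).
        assert (FH' : F H').
        { unfold F; split; [|split].
          - intros x y [h|h]; [apply H1; auto| inversion h; subst; auto].
          - intros x y y' [h|h] [h'|h'].
            + apply (H2 x); auto.
            + inversion h'; subst. exfalso; apply nx0; eauto.
            + inversion h; subst. exfalso; apply nx0; eauto.
            + inversion h; inversion h'; subst; auto.
          - intros x x' y [h|h] [h'|h'].
            + apply (H3 x x' y); auto.
            + inversion h'; subst. exfalso; apply ny0; eauto.
            + inversion h; subst. exfalso; apply ny0; eauto.
            + inversion h; inversion h'; subst; auto. }
        assert (h : H (x0, y0)).
        { apply (Hmax H' FH'); [intros u hu; left; auto | right; auto]. }
        apply nx0; eauto.
Qed.

Section Pairing.
Variable X : Type.
Variable nu : nat -> X.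
Hypothesis nu_inj : forall i j, nu i = nu j -> i = j.

Definition FP (S : (X * X * X) + X -> Prop) : Prop :=
  (forall k, S (inr (nu k))) /\
  (forall x y z z', S (inl (x, y, z)) -> S (inl (x, y, z')) -> z = z') /\
  (forall x y, S (inr x) -> S (inr y) -> exists z, S (inl (x, y, z))) /\
  (forall x y z, S (inl (x, y, z)) -> S (inr x) /\ S (inr y) /\ S (inr z)) /\
  (forall x y x' y' z, S (inl (x, y, z)) -> S (inl (x', y', z)) -> x = x' /\ y = y').

Definition P0 (u : (X * X * X) + X) : Prop :=
  match u with
  | inr x => exists k, x = nu k
  | inl (x, y, z) => exists i j, x = nu i /\ y = nu j /\ z = nu (to_nat (i, j))
  end.

Lemma FP0 : FP P0.
Proof.
  split; [|split; [|split; [|split]]].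
  - intro k; exists k; auto.
  - intros x y z z' [i [j [e1 [e2 e3]]]] [i' [j' [e1' [e2' e3']]]]; subst.
    apply nu_inj in e1'; apply nu_inj in e2'; subst; auto.
  - intros x y [i e1] [j e2]. exists (nu (to_nat (i, j))), i, j; auto.
  - intros x y z [i [j [e1 [e2 e3]]]]; split; [exists i; auto|split; [exists j; auto|eexists; eauto]].
  - intros x y x' y' z [i [j [e1 [e2 e3]]]] [i' [j' [e1' [e2' e3']]]]; subst.
    apply nu_inj in e3'. assert (e := f_equal of_nat e3').
    rewrite !cancel_of_to in e. inversion e; subst; auto.
Qed.

Lemma FP_chain C : (exists S, C S) -> (forall S, C S -> FP S) -> chain_s C -> FP (union_s C).
Proof.
  intros [S0 C0] hC ch. split; [|split; [|split; [|split]]].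
  - intro k; exists S0; split; auto; apply (hC S0 C0).
  - intros x y z z' u1 u2. destruct (union_two C _ _ ch u1 u2) as [S [CS [a b]]].
    apply (proj1 (proj2 (hC S CS)) x y z z'); auto.
  - intros x y u1 u2. destruct (union_two C _ _ ch u1 u2) as [S [CS [a b]]].
    destruct (proj1 (proj2 (proj2 (hC S CS))) x y a b) as [z hz].
    exists z, S; auto.
  - intros x y z [S [CS h]]. destruct (proj1 (proj2 (proj2 (proj2 (hC S CS)))) _ _ _ h) as [h1 [h2 h3]].
    split; [|split]; exists S; auto.
  - intros x y x' y' z u1 u2. destruct (union_two C _ _ ch u1 u2) as [S [CS [a b]]].
    apply (proj2 (proj2 (proj2 (proj2 (hC S CS)))) x y x' y' z); auto.
Qed.
Theorem pairing : exists pr : X -> X -> X,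
  forall x y x' y', pr x y = pr x' y' -> x = x' /\ y = y'.
Proof.
  destruct (zorn_sets _ FP P0 FP0 FP_chain) as [M [[M1 [M2 [M3 [M4 M5]]]] Mmax]].
  set (A := fun x => M (inr x)).
  set (f := fun x y => cf (fun (p : X * X) z => M (inl (fst p, snd p, z))) (fun p => fst p) (x, y)).
  assert (f_spec : forall x y, A x -> A y -> M (inl (x, y, f x y))).
  { intros x y ax ay. unfold f.
    apply (cf_spec (fun (p : X * X) z => M (inl (fst p, snd p, z))) _ (x, y)).
    apply M3; auto. }
  assert (fA : forall x y, A x -> A y -> A (f x y)).
  { intros x y ax ay. apply (M4 _ _ _ (f_spec x y ax ay)). }
  assert (finj : forall x y x' y', A x -> A y -> A x' -> A y' -> f x y = f x' y' -> x = x' /\ y = y').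
  { intros x y x' y' a b c d e. apply (M5 x y x' y' (f x y)); auto.
    rewrite e; auto. }
  assert (nuA : forall k, A (nu k)) by (intro; apply M1).
  destruct (comparability X A (fun x => ~ A x)) as [[j [j1 j2]]|[k [k1 k2]]].
  - exfalso.
    set (B := fun z => exists a, A a /\ z = j a).
    set (pre := fun x => if excluded_middle_informative (A x) then x
                         else cf (fun z a => A a /\ z = j a) (fun z => z) x).
    assert (pre_spec : forall x, A x \/ B x -> A (pre x) /\ x = (if excluded_middle_informative (A x) then pre x else j (pre x))).
    { intros x hx. unfold pre. destruct (excluded_middle_informative (A x)) as [h|h].
      - auto.
      - destruct hx as [hx|hx]; [contradiction|].
        pose proof (cf_spec (fun z a => A a /\ z = j a) (fun z => z) x hx) as [c1 c2].
        auto. }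
    set (tag := fun x => if excluded_middle_informative (A x) then 0 else 1).
    set (g := fun x y => if excluded_middle_informative (A x /\ A y) then f x y
               else j (f (f (nu (tag x)) (nu (tag y))) (f (pre x) (pre y)))).
    set (M' := fun u : (X * X * X) + X => match u with
               | inr x => A x \/ B x
               | inl (x, y, z) => (A x \/ B x) /\ (A y \/ B y) /\ z = g x y end).
    assert (gdom : forall x y, A x \/ B x -> A y \/ B y -> A (g x y) \/ B (g x y)).
    { intros x y hx hy. unfold g. destruct (excluded_middle_informative (A x /\ A y)) as [[a b]|h].
      - left; auto.
      - right. eexists; split; [|reflexivity].
        apply fA; apply fA; auto; apply pre_spec; auto. }
    assert (BnA : forall z, B z -> ~ A z).
    { intros z [a [ha e]]; subst; apply j1; auto. }
    assert (FM' : FP M').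
    { split; [|split; [|split; [|split]]].
      - intro k; left; apply M1.
      - intros x y z z' [_ [_ e1]] [_ [_ e2]]; congruence.
      - intros x y hx hy; exists (g x y); simpl; auto.
      - intros x y z [a [b e]]; subst; split; [exact a|split; [exact b|apply gdom; auto]].
      - intros x y x' y' z [hx [hy e1]] [hx' [hy' e2]].
        rewrite e1 in e2. unfold g in e2.
        destruct (excluded_middle_informative (A x /\ A y)) as [[a b]|h];
        destruct (excluded_middle_informative (A x' /\ A y')) as [[a' b']|h'].
        + apply finj; auto.
        + exfalso. apply (BnA (f x y)); [|apply fA; auto].
          rewrite e2. eexists; split; [|reflexivity].
          apply fA; apply fA; auto; apply pre_spec; auto.
        + exfalso. apply (BnA (f x' y')); [|apply fA; auto].
          rewrite <- e2. eexists; split; [|reflexivity].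
          apply fA; apply fA; auto; apply pre_spec; auto.
        + destruct (pre_spec x hx) as [px ex]. destruct (pre_spec y hy) as [py ey].
          destruct (pre_spec x' hx') as [px' ex']. destruct (pre_spec y' hy') as [py' ey'].
          apply j2 in e2; [|apply fA; apply fA; auto|apply fA; apply fA; auto].
          apply finj in e2; try (apply fA; auto); try (apply fA; auto).
          destruct e2 as [e3 e4].
          apply finj in e3; auto. apply finj in e4; auto.
          destruct e3 as [t1 t2]; destruct e4 as [q1 q2].
          apply nu_inj in t1; apply nu_inj in t2. unfold tag in t1, t2.
          split.
          * rewrite ex, ex'. destruct (excluded_middle_informative (A x));
            destruct (excluded_middle_informative (A x')); congruence.
          * rewrite ey, ey'. destruct (excluded_middle_informative (A y));
            destruct (excluded_middle_informative (A y')); congruence.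
}
    assert (inc : incl_s M M').
    { intros [[[x y] z]|x] h; simpl.
      - destruct (M4 _ _ _ h) as [a [b c]]. split; [left; auto|split; [left; auto|]].
        unfold g. destruct (excluded_middle_informative (A x /\ A y)) as [_|n]; [|tauto].
        apply (M2 x y); auto.
      - left; auto. }
    assert (h := Mmax M' FM' inc (inr (j (nu 0)))). simpl in h.
    apply (j1 (nu 0) (nuA 0)). apply h. right. exists (nu 0); auto.
  - set (h := fun x => if excluded_middle_informative (A x) then f (nu 0) x else f (nu 1) (k x)).
    assert (hA : forall x, A (h x)).
    { intro x; unfold h; destruct (excluded_middle_informative (A x)); apply fA; auto. }
    assert (hinj : forall x y, h x = h y -> x = y).
    { intros x y e; unfold h in e.
      destruct (excluded_middle_informative (A x)) as [a|a];
      destruct (excluded_middle_informative (A y)) as [b|b];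
      apply finj in e; auto; destruct e as [e1 e2]; apply nu_inj in e1;
      try discriminate; auto. }
    exists (fun x y => f (h x) (h y)). intros x y x' y' e.
    apply finj in e; auto. destruct e; split; apply hinj; auto.
Qed.
End Pairing.

Section CSB.
Variables A B : Type.
Variable f : A -> B.
Variable g : B -> A.
Hypothesis finj : forall x y, f x = f y -> x = y.
Hypothesis ginj : forall x y, g x = g y -> x = y.

Inductive Cset : A -> Prop :=
| C0 : forall a, (forall b, g b <> a) -> Cset a
| CS : forall a, Cset a -> Cset (g (f a)).

Definition hcsb (a : A) : B :=
  if excluded_middle_informative (Cset a) then f a
  else cf (fun a b => g b = a) f a.

Lemma ginv_spec a : ~ Cset a -> g (cf (fun a b => g b = a) f a) = a.
Proof.
  intro n. apply (cf_spec (fun a b => g b = a)).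
  apply NNPP; intro h. apply n. constructor. intros b e. apply h; eauto.
Qed.

Lemma csb : exists h : A -> B, (forall x y, h x = h y -> x = y) /\ (forall y, exists x, h x = y).
Proof.
  exists hcsb. split.
  - intros x y e. unfold hcsb in e.
    destruct (excluded_middle_informative (Cset x)) as [cx|cx];
    destruct (excluded_middle_informative (Cset y)) as [cy|cy].
    + auto.
    + exfalso. apply cy. rewrite <- (ginv_spec y cy), <- e. apply CS; auto.
    + exfalso. apply cx. rewrite <- (ginv_spec x cx), e. apply CS; auto.
    + rewrite <- (ginv_spec x cx), <- (ginv_spec y cy), e; auto.
  - intro b. destruct (classic (Cset (g b))) as [c|c].
    + inversion c as [a h e|a ca e].
      * exfalso; apply (h b); auto.
      * apply ginj in e. exists a. unfold hcsb.
        destruct (excluded_middle_informative (Cset a)); [auto|contradiction].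
    + exists (g b). unfold hcsb.
      destruct (excluded_middle_informative (Cset (g b))); [contradiction|].
      apply ginj. apply ginv_spec; auto.
Qed.
End CSB.

Section Inf.
Variable X : Type.
Hypothesis nfin : forall l : list X, exists x, ~ In x l.
Definition fresh (l : list X) : X := proj1_sig (constructive_indefinite_description _ (nfin l)).
Lemma fresh_spec l : ~ In (fresh l) l.
Proof. unfold fresh; destruct (constructive_indefinite_description _ (nfin l)); auto. Qed.
Fixpoint lst (k : nat) : list X := match k with 0 => nil | S k => fresh (lst k) :: lst k end.
Definition nuf k := fresh (lst k).
Lemma lst_in i k : i < k -> In (nuf i) (lst k).
Proof.
  induction k; intro h; [lia|]. simpl. destruct (Nat.eq_dec i k); [subst; left; auto|].
  right; apply IHk; lia.
Qed.
Lemma nuf_inj i j : nuf i = nuf j -> i = j.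
Proof.
  intro e. destruct (lt_eq_lt_dec i j) as [[h|h]|h]; auto.
  - exfalso; apply (fresh_spec (lst j)). fold (nuf j); rewrite <- e; apply lst_in; auto.
  - exfalso; apply (fresh_spec (lst i)). fold (nuf i); rewrite e; apply lst_in; auto.
Qed.
End Inf.

Lemma pigeon (T : Type) (h : nat -> T) (Sl : list T) :
  (forall i j, h i = h j -> i = j) -> (forall k, In (h k) Sl) -> False.
Proof.
  intros hi hs.
  assert (nd : NoDup (map h (seq 0 (length Sl + 1)))).
  { apply FinFun.Injective_map_NoDup; [intros a b; apply hi|apply seq_NoDup]. }
  apply NoDup_incl_length with (l' := Sl) in nd.
  - rewrite length_map, length_seq in nd; lia.
  - intros x hx. apply in_map_iff in hx. destruct hx as [k [e _]]; subst; auto.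
Qed.

Section Lists.
Variable X : Type.
Variable nu : nat -> X.
Hypothesis nu_inj : forall i j, nu i = nu j -> i = j.
Variable pr : X -> X -> X.
Hypothesis pr_inj : forall x y x' y', pr x y = pr x' y' -> x = x' /\ y = y'.
Fixpoint enc' (l : list X) : X := match l with nil => nu 0 | x :: l => pr x (enc' l) end.
Definition enc (l : list X) : X := pr (nu (length l)) (enc' l).
Lemma enc_inj l1 l2 : enc l1 = enc l2 -> l1 = l2.
Proof.
  unfold enc; intro e. apply pr_inj in e. destruct e as [e1 e2]. apply nu_inj in e1.
  revert l2 e1 e2; induction l1 as [|x l1 IH]; intros [|y l2] e1 e2; simpl in *;
    try discriminate; auto.
  apply pr_inj in e2. destruct e2; subst. f_equal. apply IH; auto.
Qed.
End Lists.

Section Lat.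
Variable L : OLData.
Hypothesis HL : is_ortho_lattice L.

Lemma le_refl a : le L a a.
Proof. apply HL. Qed.
Lemma le_antisym a b : le L a b -> le L b a -> a = b.
Proof. apply HL. Qed.
Lemma le_trans a b c : le L a b -> le L b c -> le L a c.
Proof. apply HL. Qed.
Lemma meet_l a b : le L (meet L a b) a.
Proof. apply HL; auto. Qed.
Lemma meet_r a b : le L (meet L a b) b.
Proof. apply HL; auto. Qed.
Lemma meet_glb a b c : le L c a -> le L c b -> le L c (meet L a b).
Proof. intros; apply HL; intros x [e|e]; subst; auto. Qed.
Lemma join_l a b : le L a (join L a b).
Proof. apply HL; auto. Qed.
Lemma join_r a b : le L b (join L a b).
Proof. apply HL; auto. Qed.
Lemma join_lub a b c : le L a c -> le L b c -> le L (join L a b) c.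
Proof. intros; apply HL; intros x [e|e]; subst; auto. Qed.
Lemma bot_le a : le L (bot L) a.
Proof. apply HL; auto. Qed.
Lemma le_top a : le L a (top L).
Proof. apply HL; auto. Qed.

Lemma orthomod p a : le L p a -> a = join L p (meet L (compl L p) a).
Proof.
  intro h. destruct HL as [_ [_ [_ [Hmod [_ [Hj _]]]]]].
  rewrite <- (Hmod p (compl L p) a h), Hj.
  apply le_antisym; [apply meet_glb; [apply le_top|apply le_refl]|apply meet_r].
Qed.

Lemma meet_compl a : meet L a (compl L a) = bot L.
Proof. apply HL. Qed.

Fixpoint ljoin (l : list L) : L :=
  match l with nil => bot L | x :: l => join L x (ljoin l) end.

Lemma ljoin_in p l : In p l -> le L p (ljoin l).
Proof.
  induction l as [|x l IH]; simpl; [tauto|]. intros [e|h].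
  - subst; apply join_l.
  - apply (le_trans _ _ _ (IH h)); apply join_r.
Qed.

Lemma ljoin_lub l b : (forall p, In p l -> le L p b) -> le L (ljoin l) b.
Proof.
  induction l as [|x l IH]; simpl; intro h; [apply bot_le|].
  apply join_lub; auto.
Qed.

Variable n : nat.
Hypothesis hn : (1 <= n)%nat.
Variable sim : L -> L -> Prop.
Variable D : L -> R.
Hypothesis Hreg : regular L sim.
Hypothesis HD : dimension_function L sim D.
Hypothesis Hrange : forall r, (exists a, D a = r) <-> exists k, (k <= n)%nat /\ r = (INR k / INR n)%R.

Lemma strict a b : le L b a -> b <> a -> (D b < D a)%R.
Proof.
  intros h ne. destruct HD as [_ [_ [_ [_ [Heq [Hle _]]]]]].
  destruct Hreg as [Hrefl [_ [_ [_ [_ [_ [_ Hlast]]]]]]].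
  assert (h1 : (D b <= D a)%R) by (apply Hle; exists b; split; auto).
  destruct (Rle_lt_or_eq_dec _ _ h1) as [h2|h2]; auto.
  exfalso; apply ne; apply Hlast; auto. apply Heq; auto.
Qed.

Lemma level a : exists k, D a = (INR k / INR n)%R.
Proof.
  destruct (proj1 (Hrange (D a)) (ex_intro _ a eq_refl)) as [k [_ e]]; eauto.
Qed.

Lemma level_lt a b ka kb : D a = (INR ka / INR n)%R -> D b = (INR kb / INR n)%R ->
  (D b < D a)%R -> (kb < ka)%nat.
Proof.
  intros ea eb h. rewrite ea, eb in h.
  assert (hn' : (0 < INR n)%R) by (apply lt_0_INR; lia).
  destruct (lt_dec kb ka) as [l|l]; auto. exfalso.
  assert (INR ka <= INR kb)%R by (apply le_INR; lia).
  assert (INR ka / INR n <= INR kb / INR n)%R.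
  { unfold Rdiv; apply Rmult_le_compat_r; auto. left; apply Rinv_0_lt_compat; auto. }
  lra.
Qed.

Lemma ind_level (P : L -> Prop) :
  (forall a, (forall b, le L b a -> b <> a -> P b) -> P a) -> forall a, P a.
Proof.
  intros H. assert (forall k a, D a = (INR k / INR n)%R -> P a).
  { intro k; induction k as [k IH] using lt_wf_ind. intros a ea. apply H.
    intros b hb ne. destruct (level b) as [kb eb]. apply (IH kb); auto.
    apply (level_lt a b); auto. apply strict; auto. }
  intro a; destruct (level a) as [k e]; eauto.
Qed.

Lemma atom a : a <> bot L -> exists p, minimal L p /\ le L p a.
Proof.
  revert a; apply (ind_level (fun a => a <> bot L -> exists p, minimal L p /\ le L p a)). intros a IH na.
  destruct (classic (minimal L a)) as [m|m].
  - exists a; split; auto; apply le_refl.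
  - assert (exists l, meet L a l <> bot L /\ meet L a l <> a).
    { apply NNPP; intro h; apply m; split; auto. intro l.
      destruct (classic (meet L a l = bot L)); auto. right. apply NNPP; intro h2.
      apply h; eauto. }
    destruct H as [l [h1 h2]].
    destruct (IH (meet L a l) (meet_l _ _) h2 h1) as [p [mp hp]].
    exists p; split; auto. apply (le_trans _ _ _ hp (meet_l _ _)).
Qed.

Lemma decomp a : exists l : list {m : L | minimal L m}, ljoin (map (@proj1_sig _ _) l) = a.
Proof.
  revert a; apply (ind_level (fun a => exists l : list {m : L | minimal L m}, ljoin (map (@proj1_sig _ _) l) = a)). intros a IH.
  destruct (classic (a = bot L)) as [e|na].
  - exists nil; simpl; auto.
  - destruct (atom a na) as [p [mp hp]].
    set (c := meet L (compl L p) a).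
    assert (hc : le L c a) by apply meet_r.
    assert (nc : c <> a).
    { intro e. apply (proj1 mp). apply le_antisym; [|apply bot_le].
      rewrite <- (meet_compl p). apply meet_glb; [apply le_refl|].
      apply (le_trans _ _ _ hp). rewrite <- e. apply meet_l. }
    destruct (IH c hc nc) as [l hl].
    exists (exist _ p mp :: l). simpl. rewrite hl. symmetry; apply orthomod; auto.
Qed.
End Lat.

Fixpoint subl {T : Type} (l : list T) : list (list T) :=
  match l with nil => nil :: nil | x :: l => map (cons x) (subl l) ++ subl l end.

Lemma filter_subl {T : Type} (f : T -> bool) l : In (filter f l) (subl l).
Proof.
  induction l as [|x l IH]; simpl; [auto|]. apply in_app_iff.
  destruct (f x); [left; apply in_map; auto|right; auto].
Qed.

Theorem mainTheorem5 (L : OLData) (n : nat) :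
  (1 <= n)%nat -> factorial_W_lattice_type_I L n ->
  same_card {m : L | minimal L m} R.
Proof.
  intros hn [[HL [_ [_ [sim [D [Hreg [HD Hrange]]]]]]] [phi [phinj phisur]]].
  set (X := {m : L | minimal L m}).
  set (dec := fun a => proj1_sig (constructive_indefinite_description _
                 (decomp L HL n hn sim D Hreg HD Hrange a))).
  assert (dec_spec : forall a, ljoin L (map (@proj1_sig _ _) (dec a)) = a).
  { intro a; unfold dec. destruct (constructive_indefinite_description _ _); auto. }
  set (psi := fun r => proj1_sig (constructive_indefinite_description _ (phisur r))).
  assert (psi_spec : forall r, phi (psi r) = r).
  { intro r; unfold psi; destruct (constructive_indefinite_description _ _); auto. }
  assert (psi_inj : forall r s, psi r = psi s -> r = s).
  { intros r s e; rewrite <- (psi_spec r), <- (psi_spec s), e; auto. }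
  assert (dec_le : forall a b, (forall x : X, In x (dec a) -> le L (proj1_sig x) b) -> le L a b).
  { intros a b h. rewrite <- (dec_spec a). apply ljoin_lub; auto.
    intros p hp. apply in_map_iff in hp. destruct hp as [x [e hx]]; subst; auto. }
  assert (dec_in : forall a (x : X), In x (dec a) -> le L (proj1_sig x) a).
  { intros a x hx. rewrite <- (dec_spec a). apply ljoin_in; auto.
    apply in_map; auto. }
  assert (nfin : forall xs : list X, exists x, ~ In x xs).
  { intro xs. apply NNPP; intro hno.
    assert (all : forall x, In x xs).
    { intro x; apply NNPP; intro h; apply hno; eauto. }
    set (tst := fun a (p : X) => if excluded_middle_informative (le L (proj1_sig p) a) then true else false).
    set (Fa := fun a => filter (tst a) xs).
    assert (Fle : forall a b, Fa a = Fa b -> le L a b).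
    { intros a b e. apply dec_le. intros x hx.
      assert (hin : In x (Fa a)).
      { apply filter_In; split; auto. unfold tst.
        destruct (excluded_middle_informative _) as [_|h]; auto. }
      rewrite e in hin. apply filter_In in hin. destruct hin as [_ t]. unfold tst in t.
      destruct (excluded_middle_informative _); auto; discriminate. }
    apply (pigeon _ (fun k => Fa (psi (INR k))) (subl xs)).
    - intros i j e. apply INR_eq. apply psi_inj.
      apply le_antisym with (L := L); auto.
    - intro k; apply filter_subl. }
  set (nu := nuf X nfin).
  assert (nu_inj : forall i j, nu i = nu j -> i = j) by apply nuf_inj.
  destruct (pairing X nu nu_inj) as [pr pr_inj].
  destruct (csb X R (fun x => phi (proj1_sig x)) (fun r => enc X nu pr (dec (psi r))))
    as [h [h1 h2]].
  - intros [x hx] [y hy] e. simpl in e. apply phinj in e. subst.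
    f_equal; apply proof_irrelevance.
  - intros r s e. apply enc_inj in e; auto. apply psi_inj.
    rewrite <- (dec_spec (psi r)), <- (dec_spec (psi s)), e; auto.
  - exists h; split; auto.
Qed.
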